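(* Let $d \geq 3$ and let \[ H(\mathbf{x}) = \left(\prod_{i=1}^d (1-x_i)\right)\left(1 - \sum_{i=2}^d (i-1)\, e_i(\mathbf{x})\right), \qquad \mathbf{x}=(x_1,\ldots,x_d)\in\mathbb{C}^d, \] where $e_i$ is the $i$th elementary symmetric polynomial in $x_1,\ldots,x_d$. Let $\mathcal{V} = \{\mathbf{x} \in \mathbb{C}^d : H(\mathbf{x}) = 0\}$ and $\mathbf{c} = \left(\frac{1}{d-1}, \ldots, \frac{1}{d-1}\right) \in \mathbb{C}^d$. Then $\mathbf{c}$ is a strictly minimal point of $\mathcal{V}$.
   Context: For $\mathbf{x}\in\mathbb{C}^d$, the polydisk is $\mathbf{D}(\mathbf{x}) = \{\mathbf{x}' : |x_i'| \le |x_i| \text{ for all } i\}$ and the torus is $\mathbf{T}(\mathbf{x}) = \{\mathbf{x}' : |x_i'| = |x_i| \text{ for all } i\}$. A point $\mathbf{x}\in\mathcal{V}$ is minimal if all its coordinates are nonzero and $\mathcal{V}\cap\mathbf{D}(\mathbf{x}) \subset \mathbf{T}(\mathbf{x})$; it is strictly minimal if it is minimal and it is the only point of $\mathcal{V}$ in $\mathbf{T}(\mathbf{x})$. *)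

(* Defs.v *)
From HB Require Import structures.
From mathcomp Require Import all_boot all_order all_algebra.
From mathcomp Require Import reals.
From mathcomp Require Export complex.
Set Implicit Arguments.
Unset Strict Implicit.
Unset Printing Implicit Defensive.
Import Order.TTheory GRing.Theory Num.Theory.
Local Open Scope ring_scope.
Local Open Scope complex_scope.

Section Defs.
Variable R : realType.
Local Notation C := R[i].

Definition pt (d : nat) := 'I_d -> C.

Definition esym_pt (d i : nat) (x : pt d) : C :=
  \sum_(s : {set 'I_d} | #|s| == i) \prod_(j in s) x j.

Definition Hpoly (d : nat) (x : pt d) : C :=
  (\prod_(j < d) (1 - x j)) *
  (1 - \sum_(2 <= i < d.+1) (i.-1)%:R * esym_pt i x).

Definition Vset (d : nat) : pt d -> Prop := fun x => Hpoly x = 0.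

Definition polydisk (d : nat) (x x' : pt d) : Prop :=
  forall i, `|x' i| <= `|x i|.
Definition torus (d : nat) (x x' : pt d) : Prop :=
  forall i, `|x' i| = `|x i|.

Definition minimal (d : nat) (V : pt d -> Prop) (x : pt d) : Prop :=
  V x /\ (forall i, x i != 0) /\
  (forall x', V x' -> polydisk x x' -> torus x x').

Definition strictly_minimal (d : nat) (V : pt d -> Prop) (x : pt d) : Prop :=
  minimal V x /\ (forall x', V x' -> torus x x' -> x' = x).

Definition cpt (d : nat) : pt d := fun _ => ((d.-1)%:R)^-1.
End Defs.

(* Main.v *)
Require Import Defs.
From HB Require Import structures.
From mathcomp Require Import all_boot all_order all_algebra.
From mathcomp Require Import reals.
From mathcomp Require Import ring lra.
Set Implicit Arguments. Unset Strict Implicit. Unset Printing Implicit Defensive.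
Import Order.TTheory GRing.Theory Num.Theory.
Local Open Scope ring_scope.
Local Open Scope complex_scope.
From Stdlib Require Import FunctionalExtensionality.

Section K.
Variable R : realType.
Local Notation C := R[i].
Variable d : nat.
Implicit Types x : 'I_d -> C.

Lemma E1 x : \prod_j (1 + x j) = \sum_(J : {set 'I_d}) \prod_(j in J) x j.
Proof.
under eq_bigr do rewrite addrC.
rewrite bigA_distr /=; apply: congr_big => // J _; by rewrite [RHS]big_mkcond.
Qed.

Lemma E2aux x j : \sum_(J : {set 'I_d}) (if j \in J then \prod_(i in J) x i else 0)
   = x j * \prod_(i | i != j) (1 + x i).
Proof.
have : \prod_i (x i + (if i == j then 0 else 1)) = \sum_(J : {set 'I_d}) \prod_i (if i \in J then x i else (if i == j then 0 else 1)).
  by rewrite bigA_distr /=; apply: congr_big.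
rewrite (bigD1 j) //= eqxx addr0.
under [X in _ * X = _ -> _]eq_bigr => i /negbTE -> do rewrite addrC.
move=> ->; apply: eq_bigr => J _.
case: ifP => jJ.
  rewrite big_mkcond; apply: eq_bigr => i _; case: ifP => // iJ.
  by case: eqP => // ej; rewrite ej jJ in iJ.
by rewrite (bigD1 j) //= jJ eqxx mul0r.
Qed.

Lemma E2 x : \sum_(J : {set 'I_d}) #|J|%:R * \prod_(j in J) x j
   = \sum_j x j * \prod_(i | i != j) (1 + x i).
Proof.
under eq_bigr => J _ do rewrite mulr_natl -sumr_const big_mkcond /=.
rewrite exchange_big; apply: eq_bigr => j _; exact: E2aux.
Qed.

Lemma sum_ind (k m n : nat) : \sum_(m <= i < n) ((k == i)%:R : C) = ((m <= k) && (k < n))%N%:R.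
Proof.
elim: n => [|n IH]; first by rewrite big_geq // ltn0 andbF.
case: (leqP m n) => mn.
  rewrite big_nat_recr //= IH ltnS.
  case: (eqVneq k n) => [->|kn]; first by rewrite mn ltnn leqnn andbF /= add0r.
  by rewrite (leq_eqVlt k n) (negbTE kn) /= addr0.
rewrite big_geq //; case: (leqP m k) => //= mk.
by rewrite ltnNge (leq_trans mn mk).
Qed.

Lemma E3 x : 1 - \sum_(2 <= i < d.+1) (i.-1)%:R * esym_pt i x
  = \sum_(J : {set 'I_d}) (1 - #|J|%:R) * \prod_(j in J) x j.
Proof.
rewrite /esym_pt.
have step i : (i.-1)%:R * \sum_(J : {set 'I_d} | #|J| == i) \prod_(j in J) x j
   = \sum_(J : {set 'I_d}) ((#|J| == i)%:R * ((#|J|.-1)%:R * \prod_(j in J) x j) : C).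
  rewrite big_distrr big_mkcond /=; apply: eq_bigr => J _.
  by case: eqP => [->|]; rewrite ?mul1r ?mul0r.
under eq_bigr => i _ do rewrite step.
rewrite exchange_big /=.
under eq_bigr => J _ do rewrite -big_distrl /= sum_ind.
have s0 : \sum_(J : {set 'I_d}) ((J == set0)%:R : C) = 1.
  rewrite (bigD1 set0) //= eqxx big1 ?addr0 // => J /negbTE -> //.
rewrite -[X in X - _ = _]s0 -sumrB; apply: eq_bigr => J _.
have Jd : (#|J| < d.+1)%N by rewrite ltnS (leq_trans (max_card _)) // card_ord.
rewrite Jd andbT.
case: (eqVneq J set0) => [->|J0].
  by rewrite cards0 big_set0 /= !(mul0r, subr0, mulr1).
have : #|J| != 0%N by rewrite cards_eq0.
case: #|J| => [//|[|m]] _ /=.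
  by rewrite subrr mul0r subrr mul0r.
rewrite /= -natr1; ring.
Qed.
Lemma coord (z : C) (r : R) : 0 < r -> r < 1 -> `|z| <= r%:C ->
  [/\ 1 + z != 0, 1 - z != 0, complex.Re (z / (1 + z)) <= r / (1 + r) &
      (complex.Re (z / (1 + z)) = r / (1 + r) -> z = r%:C)].
Proof.
case: z => a b r0 r1; rewrite normc_def /= lecR => hs.
set s := Num.sqrt _ in hs.
have s0 : 0 <= s by exact: sqrtr_ge0.
have ss : s ^+ 2 = a ^+ 2 + b ^+ 2 by rewrite sqr_sqrtr // addr_ge0 // sqr_ge0.
have hab : a ^+ 2 + b ^+ 2 <= r ^+ 2 by rewrite -ss; nra.
have ha : a <= r by nra.
have ha' : - r <= a by nra.
rewrite !add0r.
set N := (1 + a) ^+ 2 + b ^+ 2.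
have n2p : 0 < N by rewrite /N; nra.
have -> : a * ((1 + a) / N) - b * - (b / N) = (a + a ^+ 2 + b ^+ 2) / N by ring.
have r1p : 0 < 1 + r by lra.
split.
- rewrite eq_complex /= negb_and; apply/orP; left; apply/eqP => h; lra.
- rewrite eq_complex /= negb_and; apply/orP; left; apply/eqP => h; lra.
- rewrite ler_pdivrMr // mulrAC ler_pdivlMr // /N.
  have : 0 <= (r - a) * (1 - r) by apply: mulr_ge0; lra.
  nra.
- move=> /eqP; rewrite eqr_div ?(lt0r_neq0 n2p) ?(lt0r_neq0 r1p) // => /eqP h.
  move: h; rewrite /N => h.
  have ar : a = r.
    apply/eqP; rewrite eq_le ha /=.
    have : 0 <= (r - a) * (1 - r) by apply: mulr_ge0; lra.
    nra.
  have b0 : b = 0.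
    subst a; have : b ^+ 2 <= 0 by lra.
    by rewrite expr2; nra.
  by rewrite ar b0.
Qed.

Lemma Hform x : Hpoly x = \prod_j (1 - x j) *
  (\prod_j (1 + x j) - \sum_j x j * \prod_(i | i != j) (1 + x i)).
Proof.
rewrite /Hpoly E3 E1 -E2 -sumrB; congr (_ * _); apply: eq_bigr => J _.
by rewrite mulrBl mul1r.
Qed.

Lemma Gdiv x : (forall j, 1 + x j != 0) ->
  \prod_j (1 + x j) - \sum_j x j * \prod_(i | i != j) (1 + x i)
  = \prod_j (1 + x j) * (1 - \sum_j x j / (1 + x j)).
Proof.
move=> h; rewrite mulrBr mulr1 big_distrr /=; congr (_ - _); apply: eq_bigr => j _.
  by rewrite [in RHS](bigD1 j) //= [RHS]mulrC mulrA divfK.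
Qed.
End K.

Lemma Re_sum (R : realType) (I : finType) (F : I -> R[i]) :
  complex.Re (\sum_i F i) = \sum_i complex.Re (F i).
Proof.
apply: (big_morph (@complex.Re R)) => //.
by move=> [a b] [c e].
Qed.

Theorem mainTheorem2 (R : realType) (d : nat) (hd : (3 <= d)%N) :
  strictly_minimal (@Vset R d) (@cpt R d).
Proof.
case: d hd => [|[|[|n]]] // _.
set r : R := ((n.+2)%:R)^-1.
have r0 : 0 < r by rewrite /r invr_gt0 ltr0n.
have r1 : r < 1 by rewrite /r invf_lt1 ?ltr0n // ltr1n.
have cE : forall j, @cpt R n.+3 j = r%:C.
  by move=> j; rewrite /cpt /r fmorphV rmorph_nat.
have ncE : forall j, `|@cpt R n.+3 j| = r%:C.
  by move=> j; rewrite cE ger0_norm // ler0c ltW.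
set t := r / (1 + r).
have tsum : \sum_(j < n.+3) t = 1.
  rewrite sumr_const card_ord /t /r -mulr_natr.
  have hn : (0:R) <= n%:R := ler0n _ _.
  by field; apply/andP; split; apply/eqP => h; lra.
have key : forall x', Vset x' -> polydisk (@cpt R n.+3) x' -> x' = @cpt R n.+3.
  move=> x' hV hD.
  have hc : forall j, [/\ 1 + x' j != 0, 1 - x' j != 0, complex.Re (x' j / (1 + x' j)) <= t &
      (complex.Re (x' j / (1 + x' j)) = t -> x' j = r%:C)].
    by move=> j; apply: coord => //; rewrite -(ncE j); exact: hD.
  move: hV; rewrite /Vset Hform Gdiv; last by move=> j; case: (hc j).
  move/eqP; rewrite !mulf_eq0 => /orP [|/orP[]].
  - by move/prodf_neq0: (fun j (_ : true) => let: And4 _ h _ _ := hc j in h) => /negbTE ->.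
  - by move/prodf_neq0: (fun j (_ : true) => let: And4 h _ _ _ := hc j in h) => /negbTE ->.
  rewrite subr_eq0 => /eqP /(congr1 (@complex.Re R)); rewrite Re_sum /= => hs.
  have h0 : \sum_j (t - complex.Re (x' j / (1 + x' j))) = 0.
    by rewrite sumrB tsum -hs subrr.
  apply: functional_extensionality => j; rewrite cE.
  have hnn : forall i : 'I_n.+3, true -> 0 <= t - complex.Re (x' i / (1 + x' i)).
    by move=> i _; case: (hc i) => _ _ hle' _; rewrite subr_ge0.
  have := psumr_eq0P hnn h0 isT (i := j).
  case: (hc j) => _ _ hle heq.
  by move=> h; apply: heq; apply/eqP; rewrite eq_sym -subr_eq0 h.
split; last first.
  move=> x' hV hT; apply: key => // i; by rewrite hT.
split.
  have e1 : forall j, 1 + @cpt R n.+3 j = (1 + r)%:C by move=> j; rewrite cE rmorphD rmorph1.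
  have e2 : forall j, @cpt R n.+3 j / (1 + @cpt R n.+3 j) = t%:C.
    by move=> j; rewrite e1 cE /t [RHS]rmorphM /= [((1 + r)^-1)%:C]fmorphV.
  have e3 : \sum_j @cpt R n.+3 j / (1 + @cpt R n.+3 j) = 1.
    rewrite (eq_bigr (fun=> t%:C)); last by move=> j _; exact: e2.
    by rewrite -rmorph_sum tsum rmorph1.
  rewrite /Vset Hform Gdiv; first by rewrite e3 subrr !mulr0.
  by move=> j; rewrite e1 eq_complex /= negb_and; apply/orP; left; apply/eqP => h; lra.
split.
  by move=> i; rewrite cE; apply/eqP => -[h]; move: r0; rewrite h ltxx.
move=> x' hV hD; rewrite (key x' hV hD) => i //.
Qed.
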